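(* Fix $\alpha_1,\alpha_2>0$ and, for a variable $n>0$, let $T=\alpha_1\log n$ and $L=\alpha_2\log n$. Use either lower or upper boundary values. Then for every $\kappa>0$ there are $\alpha_3>0$ and $n_0$ such that, with $K=\alpha_3\log n$ (rounded to an integer), for every solution $\mathbf u(t)$ of the mean-field equations with $\mathbf u(0)\in[0,1]^{\mathbb Z}$ and its $K$-restriction ${}^K\mathbf u$ with ${}^Ku_x(0)=u_x(0)$ for $|x|\le K$, $$|{}^Ku_x(t)-u_x(t)|\le n^{-\kappa}\quad\text{for all }n\ge n_0,\ |x|\le L,\ t\in[0,T].$$
   Context: Fix $a,b>0$ and $M\ge1$; for $x,y\in\mathbb Z$ write $y\sim x$ iff $0<|x-y|\le M$. Mean-field equations: $u_x'=(a u_x^2+\frac{b}{2M}\sum_{y\sim x}u_y^2)(1-u_x)-u_x$, $x\in\mathbb Z$. For an integer $K\ge1$ and boundary values $\beta\in\{0,1\}$, the $K$-restriction ${}^K\mathbf u(t)=({}^Ku_x(t))_{|x|\le K}$ is the solution of the finite system ${}^Ku_x'=(a\,{}^Ku_x^2+\frac{b}{2M}\sum_{y\sim x}\tilde u_y^2)(1-{}^Ku_x)-{}^Ku_x$ for $|x|\le K$, where $\tilde u_y={}^Ku_y$ if $|y|\le K$ and $\tilde u_y=\beta$ if $|y|>K$. $\beta=0$ is called lower boundary values, $\beta=1$ upper boundary values. *)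

(* Defs.v *)
From Stdlib Require Import Reals ZArith Lra Lia.
Open Scope R_scope.

(* Sum over neighbours y ~ x, i.e. 0 < |x - y| <= M, of (w y)^2:
   nbr_sum M w x = sum_{k=1}^{M} (w (x+k)^2 + w (x-k)^2). *)
Fixpoint nbr_sum (M : nat) (w : Z -> R) (x : Z) : R :=
  match M with
  | O => 0
  | S k => nbr_sum k w x + (w (x + Z.of_nat (S k))%Z) ^ 2
                         + (w (x - Z.of_nat (S k))%Z) ^ 2
  end.

(* Right-hand side of the mean-field equation at site x, given the own value
   ux and the configuration w used for the neighbours. *)
Definition mf_rhs (a b : R) (M : nat) (ux : R) (w : Z -> R) (x : Z) : R :=
  (a * ux ^ 2 + b / (2 * INR M) * nbr_sum M w x) * (1 - ux) - ux.

Definition right_cont_at0 (f : R -> R) : Prop :=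
  forall eps, 0 < eps -> exists delta, 0 < delta /\
    forall t, 0 <= t < delta -> Rabs (f t - f 0) < eps.

Definition is_mf_solution (a b : R) (M : nat) (u : Z -> R -> R) : Prop :=
  forall x : Z,
    right_cont_at0 (u x) /\
    forall t, 0 < t ->
      derivable_pt_lim (u x) t (mf_rhs a b M (u x t) (fun y => u y t) x).

Definition ext_cfg (K : nat) (beta : R) (v : Z -> R -> R) (t : R) : Z -> R :=
  fun y => if (Z.abs y <=? Z.of_nat K)%Z then v y t else beta.

Definition is_restricted_solution (a b : R) (M K : nat) (beta : R)
    (v : Z -> R -> R) : Prop :=
  forall x : Z, (Z.abs x <= Z.of_nat K)%Z ->
    right_cont_at0 (v x) /\
    forall t, 0 < t ->
      derivable_pt_lim (v x) t (mf_rhs a b M (v x t) (ext_cfg K beta v t) x).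

Definition roundK (alpha3 : R) (n : nat) : nat :=
  Z.to_nat (up (alpha3 * ln (INR n))).

(* Main.v *)
Require Import Defs.
From Stdlib Require Import Reals ZArith Lra Lia Psatz.
Open Scope R_scope.

Lemma exp_le x y : x <= y -> exp x <= exp y.
Proof. intros [H|H]. left; apply exp_increasing; auto. subst; lra. Qed.

Lemma rc_lim f : right_cont_at0 f <-> limit1_in f (fun t => 0 <= t) (f 0) 0.
Proof.
  unfold right_cont_at0, limit1_in, limit_in; simpl; unfold R_dist; split.
  - intros H eps Heps. destruct (H eps Heps) as [d [Hd H']]. exists d; split; auto.
    intros x [Hx1 Hx2]. apply H'. rewrite Rminus_0_r in Hx2.
    rewrite Rabs_right in Hx2; lra.
  - intros H eps Heps. destruct (H eps Heps) as [d [Hd H']]. exists d; split; auto.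
    intros x Hx. apply H'. split. lra. rewrite Rminus_0_r, Rabs_right; lra.
Qed.

Lemma rc_cont f : continuity_pt f 0 -> right_cont_at0 f.
Proof.
  intros H eps Heps. destruct (H eps Heps) as [d [Hd H']]. exists d; split; auto.
  intros t Ht. destruct (Req_dec t 0) as [->|Hn].
  - rewrite Rminus_diag, Rabs_R0; lra.
  - apply H'. split. split; [exact I| auto]. simpl. unfold R_dist.
    rewrite Rminus_0_r, Rabs_right; lra.
Qed.

Lemma rc_plus f g : right_cont_at0 f -> right_cont_at0 g -> right_cont_at0 (fun t => f t + g t).
Proof. rewrite !rc_lim. intros; apply limit_plus; auto. Qed.
Lemma rc_minus f g : right_cont_at0 f -> right_cont_at0 g -> right_cont_at0 (fun t => f t - g t).
Proof. rewrite !rc_lim. intros; apply limit_minus; auto. Qed.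
Lemma rc_mult f g : right_cont_at0 f -> right_cont_at0 g -> right_cont_at0 (fun t => f t * g t).
Proof. rewrite !rc_lim. intros; apply limit_mul; auto. Qed.
Lemma rc_const c : right_cont_at0 (fun _ => c).
Proof. intros e He; exists 1; split; [lra|]; intros; rewrite Rminus_diag, Rabs_R0; lra. Qed.

Lemma mono_le f df : right_cont_at0 f ->
  (forall t, 0 < t -> derivable_pt_lim f t (df t)) ->
  (forall t, 0 < t -> df t <= 0) ->
  forall t, 0 <= t -> f t <= f 0.
Proof.
  intros Hrc Hd Hn t Ht.
  assert (Hst : forall s, 0 < s < t -> f t <= f s).
  { intros s Hs. destruct (MVT_cor2 f df s t) as [c [Hc1 Hc2]]; [lra| |].
    - intros c Hc; apply Hd; lra.
    - assert (df c <= 0) by (apply Hn; lra). nra. }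
  destruct (Req_dec t 0) as [->|Htn]; [lra|].
  apply Rnot_lt_le; intro Hlt.
  destruct (Hrc (f t - f 0)) as [d [Hd0 Hd1]]; [lra|].
  set (s := Rmin (d/2) (t/2)).
  assert (0 < s) by (unfold s; apply Rmin_glb_lt; lra).
  assert (s <= d/2) by apply Rmin_l. assert (s <= t/2) by apply Rmin_r.
  specialize (Hd1 s ltac:(lra)). specialize (Hst s ltac:(lra)).
  apply Rabs_def2 in Hd1. lra.
Qed.

Lemma dlin k x : derivable_pt_lim (fun s => k * s) x k.
Proof.
  pose proof (derivable_pt_lim_mult (fun _ => k) (fun s => s) x 0 1
    (derivable_pt_lim_const k x) (derivable_pt_lim_id x)) as H.
  unfold mult_fct in H. replace (0 * x + k * 1) with k in H by ring. exact H.
Qed.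

Lemma dmul f g df dg x : derivable_pt_lim f x df -> derivable_pt_lim g x dg ->
  derivable_pt_lim (fun s => f s * g s) x (df * g x + f x * dg).
Proof. intros H1 H2. exact (derivable_pt_lim_mult f g x df dg H1 H2). Qed.
Lemma dplus f g df dg x : derivable_pt_lim f x df -> derivable_pt_lim g x dg ->
  derivable_pt_lim (fun s => f s + g s) x (df + dg).
Proof. intros H1 H2. exact (derivable_pt_lim_plus f g x df dg H1 H2). Qed.
Lemma dminus f g df dg x : derivable_pt_lim f x df -> derivable_pt_lim g x dg ->
  derivable_pt_lim (fun s => f s - g s) x (df - dg).
Proof. intros H1 H2. exact (derivable_pt_lim_minus f g x df dg H1 H2). Qed.
Lemma dexpl k x : derivable_pt_lim (fun s => exp (k * s)) x (exp (k * x) * k).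
Proof. exact (derivable_pt_lim_comp (fun s => k * s) exp x k (exp (k*x)) (dlin k x) (derivable_pt_lim_exp _)). Qed.

Lemma gronwall F D A B : 0 < A -> 0 <= B -> right_cont_at0 F -> F 0 = 0 ->
  (forall t, 0 < t -> derivable_pt_lim F t (D t)) ->
  (forall t, 0 < t -> D t <= A * F t + B) ->
  forall t, 0 <= t -> F t <= B / A * exp (A * t).
Proof.
  intros HA HB Hrc H0 Hd Hi t Ht.
  set (G := fun s => (F s + B / A) * exp (- A * s)).
  assert (HG : G t <= G 0).
  { apply (mono_le G (fun s => D s * exp (- A * s) + (F s + B/A) * (exp (- A * s) * (- A)))); auto.
    - unfold G. apply rc_mult. apply rc_plus; auto using rc_const.
      apply rc_cont. apply derivable_continuous_pt.
      exists (exp (-A * 0) * (-A)). apply dexpl.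
    - intros s Hs. unfold G. apply (dmul (fun s => F s + B/A) (fun s => exp (-A*s))).
      + replace (D s) with (D s + 0) by ring. apply (dplus F (fun _ => B/A)); auto.
        apply derivable_pt_lim_const.
      + apply dexpl.
    - intros s Hs. specialize (Hi s Hs). assert (0 < exp (-A*s)) by apply exp_pos.
      assert (D s + (F s + B/A) * (- A) <= 0).
      { assert (B / A * A = B) by (field; lra). nra. }
      nra. }
  unfold G in HG. rewrite H0, Rmult_0_r, exp_0 in HG.
  assert (Hm : exp (- A * t) * exp (A * t) = 1).
  { rewrite <- exp_plus. replace (-A*t + A*t) with 0 by ring. apply exp_0. }
  assert (0 < exp (A*t)) by apply exp_pos.
  assert ((F t + B/A) * exp (-A*t) * exp (A*t) <= (0 + B/A) * 1 * exp (A*t)) by nra.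
  replace ((F t + B/A) * exp (-A*t) * exp (A*t)) with ((F t + B/A) * (exp (-A*t) * exp (A*t))) in H1 by ring.
  rewrite Hm in H1.
  assert (0 <= B/A) by (unfold Rdiv; apply Rmult_le_pos; [lra| left; apply Rinv_0_lt_compat; lra]). nra.
Qed.

Lemma cont_at f m : continuity_pt f m -> forall eps, 0 < eps ->
  exists d, 0 < d /\ forall s, Rabs (s - m) < d -> Rabs (f s - f m) < eps.
Proof.
  intros H eps Heps. destruct (H eps Heps) as [d [Hd H']]. exists d; split; auto.
  intros s Hs. destruct (Req_dec s m) as [->|Hn].
  - rewrite Rminus_diag, Rabs_R0; lra.
  - apply H'. split. split; [exact I| auto]. exact Hs.
Qed.

Lemma rc_at f df m : right_cont_at0 f -> (forall t, 0 < t -> derivable_pt_lim f t (df t)) ->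
  0 <= m -> forall eps, 0 < eps ->
  exists d, 0 < d /\ forall s, m <= s < m + d -> Rabs (f s - f m) < eps.
Proof.
  intros Hrc Hd Hm eps Heps. destruct (Req_dec m 0) as [->|Hn].
  - destruct (Hrc eps Heps) as [d [Hd0 H']]. exists d; split; auto. intros; apply H'; lra.
  - assert (Hc : continuity_pt f m).
    { apply derivable_continuous_pt. exists (df m). apply Hd; lra. }
    destruct (cont_at f m Hc eps Heps) as [d [Hd0 H']]. exists d; split; auto.
    intros s Hs. apply H'. rewrite Rabs_right; lra.
Qed.

Lemma barrier f df c : right_cont_at0 f ->
  (forall t, 0 < t -> derivable_pt_lim f t (df t)) -> f 0 <= c ->
  (forall t, 0 < t -> c < f t -> df t < 0) -> forall t, 0 <= t -> f t <= c.
Proof.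
  intros Hrc Hd H0 Hneg t1 Ht1. apply Rnot_lt_le; intro Hc1.
  assert (Ht1p : 0 < t1) by (destruct Ht1 as [?|Heq]; [auto| subst; lra]).
  set (E := fun s => 0 <= s <= t1 /\ f s <= c).
  destruct (completeness E) as [m [Hub Hlub]].
  { exists t1. intros s [Hs _]. lra. }
  { exists 0. split; lra. }
  assert (Hm0 : 0 <= m) by (apply Hub; split; lra).
  assert (Hm1 : m <= t1) by (apply Hlub; intros s [Hs _]; lra).
  assert (C1 : forall s, m < s <= t1 -> c < f s).
  { intros s Hs. apply Rnot_le_lt; intro Hle. assert (s <= m) by (apply Hub; split; lra). lra. }
  assert (C2 : c < f m).
  { destruct (Req_dec m t1) as [->|Hne]; [lra|].
    assert (Hdec : forall s, m < s < t1 -> f t1 < f s).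
    { intros s Hs. destruct (MVT_cor2 f df s t1) as [x [Hx1 Hx2]]; [lra| |].
      - intros x Hx; apply Hd; lra.
      - assert (df x < 0) by (apply Hneg; [lra| apply C1; lra]). nra. }
    apply Rnot_le_lt; intro Hle.
    destruct (rc_at f df m Hrc Hd Hm0 (f t1 - f m)) as [d [Hd0 Hd1]]; [lra|].
    set (s := Rmin (m + d/2) ((m + t1)/2)).
    assert (s <= m + d/2) by apply Rmin_l. assert (s <= (m+t1)/2) by apply Rmin_r.
    assert (m < s) by (unfold s; apply Rmin_glb_lt; lra).
    specialize (Hd1 s ltac:(lra)). specialize (Hdec s ltac:(lra)).
    apply Rabs_def2 in Hd1. lra. }
  destruct (Req_dec m 0) as [->|Hn]; [lra|].
  assert (Hc : continuity_pt f m).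
  { apply derivable_continuous_pt. exists (df m). apply Hd; lra. }
  destruct (cont_at f m Hc (f m - c)) as [d [Hd0 Hd1]]; [lra|].
  assert (m <= m - d/2); [|lra].
  apply Hlub. intros s [Hs Hfs]. apply Rnot_lt_le; intro Hlt.
  assert (s <= m) by (apply Hub; split; auto).
  assert (Rabs (s - m) < d) by (rewrite Rabs_left1; lra).
  specialize (Hd1 s H1). apply Rabs_def2 in Hd1. lra.
Qed.

Lemma nbr_sum_nonneg M w x : 0 <= nbr_sum M w x.
Proof. induction M; simpl; [lra|]. nra. Qed.

Lemma coefc_nonneg b M : 0 < b -> 0 <= b / (2 * INR M).
Proof.
  intros Hb. destruct M. simpl. rewrite Rmult_0_r. unfold Rdiv. rewrite Rinv_0. lra.
  unfold Rdiv. apply Rmult_le_pos; [lra|]. left; apply Rinv_0_lt_compat.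
  rewrite S_INR. pose proof (pos_INR M). lra.
Qed.

Lemma rhs_neg a b M p w x : 0 < a -> 0 < b -> 1 < p -> mf_rhs a b M p w x < 0.
Proof.
  intros. unfold mf_rhs. pose proof (nbr_sum_nonneg M w x). pose proof (coefc_nonneg b M H0).
  assert (0 <= a * p^2 + b / (2 * INR M) * nbr_sum M w x) by (apply Rplus_le_le_0_compat; nra).
  nra.
Qed.
Lemma rhs_pos a b M p w x : 0 < a -> 0 < b -> p < 0 -> 0 < mf_rhs a b M p w x.
Proof.
  intros. unfold mf_rhs. pose proof (nbr_sum_nonneg M w x). pose proof (coefc_nonneg b M H0).
  assert (0 <= a * p^2 + b / (2 * INR M) * nbr_sum M w x) by (apply Rplus_le_le_0_compat; nra).
  nra.
Qed.

Lemma inv01 a b M f (W : R -> Z -> R) x : 0 < a -> 0 < b -> right_cont_at0 f ->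
  (forall t, 0 < t -> derivable_pt_lim f t (mf_rhs a b M (f t) (W t) x)) ->
  0 <= f 0 <= 1 -> forall t, 0 <= t -> 0 <= f t <= 1.
Proof.
  intros Ha Hb Hrc Hd H0 t Ht. split.
  - assert (0 - f t <= 0); [|lra].
    apply (barrier (fun t => 0 - f t) (fun t => 0 - mf_rhs a b M (f t) (W t) x) 0); auto.
    + apply rc_minus; auto using rc_const.
    + intros s Hs. apply dminus; auto. apply derivable_pt_lim_const.
    + lra.
    + intros s Hs Hc. pose proof (rhs_pos a b M (f s) (W s) x Ha Hb ltac:(lra)). lra.
  - apply (barrier f (fun t => mf_rhs a b M (f t) (W t) x) 1); auto; try lra.
    intros s Hs Hc. apply rhs_neg; auto.
Qed.

Fixpoint ssum (g : Z -> R) (lo : Z) (n : nat) : R :=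
  match n with O => 0 | S m => g lo + ssum g (lo + 1)%Z m end.

Lemma ssum_split g lo n m : ssum g lo (n + m) = ssum g lo n + ssum g (lo + Z.of_nat n)%Z m.
Proof.
  revert lo; induction n; intros lo; simpl.
  - rewrite Z.add_0_r; ring.
  - rewrite IHn. replace (lo + 1 + Z.of_nat n)%Z with (lo + Z.pos (Pos.of_succ_nat n))%Z by lia. ring.
Qed.

Lemma ssum_ext g h lo n : (forall y, (lo <= y < lo + Z.of_nat n)%Z -> g y = h y) ->
  ssum g lo n = ssum h lo n.
Proof.
  revert lo; induction n; intros lo H; simpl; auto.
  rewrite (H lo) by lia. rewrite (IHn (lo+1)%Z); auto. intros y Hy; apply H; lia.
Qed.

Lemma ssum_le g h lo n : (forall y, (lo <= y < lo + Z.of_nat n)%Z -> g y <= h y) ->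
  ssum g lo n <= ssum h lo n.
Proof.
  revert lo; induction n; intros lo H; simpl; [lra|].
  assert (g lo <= h lo) by (apply H; lia).
  assert (ssum g (lo+1) n <= ssum h (lo+1) n) by (apply IHn; intros; apply H; lia). lra.
Qed.

Lemma ssum_nonneg g lo n : (forall y, (lo <= y < lo + Z.of_nat n)%Z -> 0 <= g y) ->
  0 <= ssum g lo n.
Proof.
  intros H. replace 0 with (ssum (fun _ => 0) lo n). apply ssum_le; auto.
  clear H; revert lo; induction n; intros; simpl; auto. rewrite IHn; ring.
Qed.

Lemma ssum_plus g h lo n : ssum (fun y => g y + h y) lo n = ssum g lo n + ssum h lo n.
Proof. revert lo; induction n; intros; simpl; [ring|]. rewrite IHn; ring. Qed.

Lemma ssum_scal k g lo n : ssum (fun y => k * g y) lo n = k * ssum g lo n.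
Proof. revert lo; induction n; intros; simpl; [ring|]. rewrite IHn; ring. Qed.

Lemma ssum_shift g c lo n : ssum (fun y => g (y + c)%Z) lo n = ssum g (lo + c)%Z n.
Proof.
  revert lo; induction n; intros; simpl; auto. rewrite IHn.
  replace (lo + 1 + c)%Z with (lo + c + 1)%Z by lia. auto.
Qed.

Lemma ssum_bound1 g lo n : (forall y, (lo <= y < lo + Z.of_nat n)%Z -> g y <= 1) ->
  ssum g lo n <= INR n.
Proof.
  revert lo; induction n; intros lo H; cbn [ssum]; [simpl; lra|].
  assert (g lo <= 1) by (apply H; lia).
  assert (ssum g (lo+1) n <= INR n) by (apply IHn; intros; apply H; lia).
  rewrite S_INR. lra.
Qed.

Lemma ssum_term g lo n y : (forall y, (lo <= y < lo + Z.of_nat n)%Z -> 0 <= g y) ->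
  (lo <= y < lo + Z.of_nat n)%Z -> g y <= ssum g lo n.
Proof.
  revert lo; induction n; intros lo H Hy; simpl; [lia|].
  destruct (Z.eq_dec y lo) as [->|Hne].
  - assert (0 <= ssum g (lo+1) n) by (apply ssum_nonneg; intros; apply H; lia). lra.
  - assert (0 <= g lo) by (apply H; lia).
    assert (g y <= ssum g (lo+1) n) by (apply IHn; [intros; apply H|]; lia). lra.
Qed.

Lemma ssum_deriv (g dg : Z -> R -> R) lo n t :
  (forall y, (lo <= y < lo + Z.of_nat n)%Z -> derivable_pt_lim (g y) t (dg y t)) ->
  derivable_pt_lim (fun s => ssum (fun y => g y s) lo n) t (ssum (fun y => dg y t) lo n).
Proof.
  revert lo; induction n; intros lo H; simpl.
  - apply derivable_pt_lim_const.
  - apply (derivable_pt_lim_plus (g lo) (fun s => ssum (fun y => g y s) (lo + 1)%Z n)).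
    apply H; lia. apply IHn; intros; apply H; lia.
Qed.

Section Shift.
Variable G : Z -> R.
Variable K : nat.
Hypothesis Gpos : forall y, 0 <= G y.
Hypothesis Gout : forall y, (Z.of_nat K < Z.abs y)%Z -> G y <= 1.

Lemma shift_plus k : ssum (fun y => G (y + Z.of_nat k)%Z) (- Z.of_nat K) (2*K+1)
   <= ssum G (- Z.of_nat K) (2*K+1) + INR k.
Proof.
  rewrite ssum_shift.
  pose proof (ssum_split G (- Z.of_nat K) k (2*K+1)) as E1.
  pose proof (ssum_split G (- Z.of_nat K) (2*K+1) k) as E2.
  rewrite Nat.add_comm in E2. rewrite E2 in E1.
  assert (0 <= ssum G (- Z.of_nat K) k) by (apply ssum_nonneg; auto).
  assert (ssum G (- Z.of_nat K + Z.of_nat (2 * K + 1)) k <= INR k).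
  { apply ssum_bound1. intros y Hy. apply Gout. lia. }
  lra.
Qed.

Lemma shift_minus k : ssum (fun y => G (y - Z.of_nat k)%Z) (- Z.of_nat K) (2*K+1)
   <= ssum G (- Z.of_nat K) (2*K+1) + INR k.
Proof.
  rewrite (ssum_ext (fun y => G (y - Z.of_nat k)%Z) (fun y => G (y + - Z.of_nat k)%Z))
    by (intros; f_equal; lia).
  rewrite ssum_shift.
  pose proof (ssum_split G (- Z.of_nat K + - Z.of_nat k) k (2*K+1)) as E1.
  pose proof (ssum_split G (- Z.of_nat K + - Z.of_nat k) (2*K+1) k) as E2.
  rewrite Nat.add_comm in E2. rewrite E2 in E1.
  replace (- Z.of_nat K + - Z.of_nat k + Z.of_nat k)%Z with (- Z.of_nat K)%Z in E1 by lia.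
  assert (0 <= ssum G (- Z.of_nat K + - Z.of_nat k + Z.of_nat (2 * K + 1)) k)
    by (apply ssum_nonneg; auto).
  assert (ssum G (- Z.of_nat K + - Z.of_nat k) k <= INR k).
  { apply ssum_bound1. intros y Hy. apply Gout. lia. }
  lra.
Qed.
End Shift.

Lemma sq_diff d W U : 0 <= W <= 1 -> 0 <= U <= 1 ->
  2 * Rabs d * Rabs (W^2 - U^2) <= 2 * d^2 + 2 * (W - U)^2.
Proof.
  intros HW HU.
  replace (W^2 - U^2) with ((W - U) * (W + U)) by ring.
  rewrite Rabs_mult, (Rabs_right (W+U)) by lra.
  pose proof (Rabs_pos d). pose proof (Rabs_pos (W-U)).
  pose proof (pow2_abs d). pose proof (pow2_abs (W-U)).
  set (A := Rabs d) in *. set (B := Rabs (W-U)) in *.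
  assert (2 * A * (B * (W + U)) <= 4 * A * B) by (assert (0 <= A*B) by (apply Rmult_le_pos; auto); assert (0 <= A*B*(2 - (W+U))) by (apply Rmult_le_pos; lra); nra).
  assert (4 * A * B <= 2 * A^2 + 2 * B^2) by (pose proof (pow2_ge_0 (A-B)); nra).
  lra.
Qed.

Lemma nbr_S M w x : nbr_sum (S M) w x =
  nbr_sum M w x + (w (x + Z.of_nat (S M))%Z)^2 + (w (x - Z.of_nat (S M))%Z)^2.
Proof. reflexivity. Qed.

Lemma nbr_diff M W U x d : (forall y, 0 <= W y <= 1) -> (forall y, 0 <= U y <= 1) ->
  2 * Rabs d * Rabs (nbr_sum M W x - nbr_sum M U x)
    <= 4 * INR M * d^2 + 2 * nbr_sum M (fun y => W y - U y) x.
Proof.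
  intros HW HU. induction M.
  - simpl. rewrite Rminus_diag, Rabs_R0. lra.
  - rewrite !nbr_S, S_INR.
    set (y1 := (x + Z.of_nat (S M))%Z). set (y2 := (x - Z.of_nat (S M))%Z).
    pose proof (sq_diff d (W y1) (U y1) (HW y1) (HU y1)).
    pose proof (sq_diff d (W y2) (U y2) (HW y2) (HU y2)).
    replace (nbr_sum M W x + W y1 ^ 2 + W y2 ^ 2 - (nbr_sum M U x + U y1 ^ 2 + U y2 ^ 2))
      with ((nbr_sum M W x - nbr_sum M U x) + (W y1 ^ 2 - U y1^2) + (W y2 ^ 2 - U y2 ^ 2)) by ring.
    pose proof (Rabs_triang (nbr_sum M W x - nbr_sum M U x + (W y1 ^ 2 - U y1 ^ 2)) (W y2 ^ 2 - U y2 ^ 2)).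
    pose proof (Rabs_triang (nbr_sum M W x - nbr_sum M U x) (W y1 ^ 2 - U y1 ^ 2)).
    pose proof (Rabs_pos d).
    assert (2 * Rabs d * Rabs (nbr_sum M W x - nbr_sum M U x + (W y1 ^ 2 - U y1 ^ 2) + (W y2 ^ 2 - U y2 ^ 2))
      <= 2 * Rabs d * (Rabs (nbr_sum M W x - nbr_sum M U x) + Rabs (W y1 ^ 2 - U y1 ^ 2) + Rabs (W y2 ^ 2 - U y2 ^ 2))).
    { apply Rmult_le_compat_l; lra. }
    lra.
Qed.

Lemma key_site a b M p q W U x : 0 < a -> 0 < b -> (1 <= M)%nat ->
  0 <= p <= 1 -> 0 <= q <= 1 -> (forall y, 0 <= W y <= 1) -> (forall y, 0 <= U y <= 1) ->
  2 * (p - q) * (mf_rhs a b M p W x - mf_rhs a b M q U x)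
   <= (4 * a + 4 * INR M * (b / (2 * INR M))) * (p - q)^2
      + 2 * (b / (2 * INR M)) * nbr_sum M (fun y => W y - U y) x.
Proof.
  intros Ha Hb HM Hp Hq HW HU. unfold mf_rhs.
  set (c := b / (2 * INR M)).
  assert (Hc : 0 <= c).
  { unfold c, Rdiv. apply Rmult_le_pos; [lra|]. left; apply Rinv_0_lt_compat.
    apply lt_0_INR in HM. lra. }
  set (SW := nbr_sum M W x). set (SU := nbr_sum M U x).
  set (N := nbr_sum M (fun y => W y - U y) x).
  assert (HSU : 0 <= SU) by apply nbr_sum_nonneg.
  assert (HN : 0 <= N) by apply nbr_sum_nonneg.
  pose proof (nbr_diff M W U x (p - q) HW HU) as HD. fold SW SU N in HD.
  set (d := p - q).
  replace (2 * d * ((a * p ^ 2 + c * SW) * (1 - p) - p - ((a * q ^ 2 + c * SU) * (1 - q) - q)))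
    with (2 * a * d^2 * (p + q - p^2 - p*q - q^2) + c * (1 - p) * (2 * d * (SW - SU))
          - 2 * c * SU * d^2 - 2 * d^2) by (unfold d; ring).
  assert (T1 : 2 * a * d^2 * (p + q - p^2 - p*q - q^2) <= 4 * a * d^2).
  { assert (0 <= d^2) by nra. assert (p + q - p^2 - p*q - q^2 <= 2) by nra.
    assert (0 <= a * d^2 * (2 - (p + q - p^2 - p*q - q^2))) by (apply Rmult_le_pos; nra). nra. }
  assert (T2 : 2 * d * (SW - SU) <= 2 * Rabs d * Rabs (SW - SU)).
  { assert (d*(SW-SU) <= Rabs d * Rabs (SW-SU)) by (rewrite <- Rabs_mult; apply Rle_abs). lra. }
  assert (T3 : c * (1 - p) * (2 * d * (SW - SU)) <= c * (4 * INR M * d^2 + 2 * N)).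
  { assert (0 <= 2 * Rabs d * Rabs (SW - SU)).
    { pose proof (Rabs_pos d); pose proof (Rabs_pos (SW - SU)); nra. }
    assert (0 <= c * (1 - p)) by nra. assert (c * (1-p) <= c) by nra.
    apply Rle_trans with (c * (1 - p) * (2 * Rabs d * Rabs (SW - SU))).
    apply Rmult_le_compat_l; lra.
    apply Rle_trans with (c * (2 * Rabs d * Rabs (SW - SU))).
    apply Rmult_le_compat_r; lra.
    apply Rmult_le_compat_l; [lra|]. exact HD. }
  assert (0 <= c * SU * d^2) by (assert (0 <= d^2) by nra; apply Rmult_le_pos; [apply Rmult_le_pos|]; lra).
  assert (0 <= d^2) by nra.
  nra.
Qed.

Definition wt (K : nat) (y : Z) : R := exp (IZR (Z.of_nat K - Z.abs y)).

Fixpoint NL (m : nat) (G : Z -> R) (x : Z) : R :=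
  match m with O => 0 | S k => NL k G x + G (x + Z.of_nat (S k))%Z + G (x - Z.of_nat (S k))%Z end.

Lemma wt_pos K y : 0 < wt K y.
Proof. apply exp_pos. Qed.

Lemma wt_shift K x y k : (Z.abs (x - y) <= Z.of_nat k)%Z -> wt K x <= exp (INR k) * wt K y.
Proof.
  intros H. unfold wt. rewrite <- exp_plus. apply exp_le.
  rewrite INR_IZR_INZ, <- plus_IZR. apply IZR_le. lia.
Qed.

Lemma nbr_weight K M m D x : (m <= M)%nat ->
  wt K x * nbr_sum m D x <= exp (INR M) * NL m (fun y => wt K y * (D y)^2) x.
Proof.
  induction m; intros Hm.
  - simpl. lra.
  - rewrite nbr_S. cbn [NL].
    assert (HeM : exp (INR (S m)) <= exp (INR M)) by (apply exp_le, le_INR; auto).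
    set (y1 := (x + Z.of_nat (S m))%Z). set (y2 := (x - Z.of_nat (S m))%Z).
    assert (H1 : wt K x <= exp (INR M) * wt K y1).
    { apply Rle_trans with (exp (INR (S m)) * wt K y1). apply wt_shift; unfold y1; lia.
      apply Rmult_le_compat_r; [left; apply wt_pos| auto]. }
    assert (H2 : wt K x <= exp (INR M) * wt K y2).
    { apply Rle_trans with (exp (INR (S m)) * wt K y2). apply wt_shift; unfold y2; lia.
      apply Rmult_le_compat_r; [left; apply wt_pos| auto]. }
    specialize (IHm ltac:(lia)).
    assert (wt K x * D y1 ^ 2 <= exp (INR M) * wt K y1 * D y1 ^ 2)
      by (apply Rmult_le_compat_r; [nra| auto]).
    assert (wt K x * D y2 ^ 2 <= exp (INR M) * wt K y2 * D y2 ^ 2)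
      by (apply Rmult_le_compat_r; [nra| auto]).
    replace (wt K x * (nbr_sum m D x + D y1 ^ 2 + D y2 ^ 2)) with
      (wt K x * nbr_sum m D x + wt K x * D y1 ^ 2 + wt K x * D y2 ^ 2) by ring.
    replace (exp (INR M) * (NL m (fun y : Z => wt K y * D y ^ 2) x + wt K y1 * D y1 ^ 2 + wt K y2 * D y2 ^ 2))
      with (exp (INR M) * NL m (fun y : Z => wt K y * D y ^ 2) x + exp (INR M) * wt K y1 * D y1 ^ 2 + exp (INR M) * wt K y2 * D y2 ^ 2) by ring.
    lra.
Qed.

Lemma NL_sum G K M m : (forall y, 0 <= G y) -> (forall y, (Z.of_nat K < Z.abs y)%Z -> G y <= 1) ->
  (m <= M)%nat ->
  ssum (fun x => NL m G x) (- Z.of_nat K) (2*K+1)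
    <= 2 * INR m * (ssum G (- Z.of_nat K) (2*K+1) + INR M).
Proof.
  intros Gp Go. induction m; intros Hm.
  - cbn [NL]. replace (ssum (fun _ => 0) (- Z.of_nat K) (2*K+1)) with 0. simpl; lra.
    generalize (- Z.of_nat K)%Z. clear. induction (2*K+1)%nat; intros; simpl; auto. rewrite <- IHn; ring.
  - cbn [NL]. rewrite !ssum_plus.
    pose proof (shift_plus G K Gp Go (S m)). pose proof (shift_minus G K Gp Go (S m)).
    specialize (IHm ltac:(lia)).
    assert (INR (S m) <= INR M) by (apply le_INR; auto).
    rewrite S_INR in *.
    assert (0 <= ssum G (- Z.of_nat K) (2*K+1)) by (apply ssum_nonneg; auto).
    change (ssum (NL m G) (- Z.of_nat K) (2 * K + 1)) with (ssum (fun x => NL m G x) (- Z.of_nat K) (2*K+1)).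
    nra.
Qed.

Lemma ssum_rc (g : Z -> R -> R) lo n :
  (forall y, (lo <= y < lo + Z.of_nat n)%Z -> right_cont_at0 (g y)) ->
  right_cont_at0 (fun t => ssum (fun y => g y t) lo n).
Proof.
  revert lo; induction n; intros lo H; simpl.
  - apply rc_const.
  - apply (rc_plus (g lo) (fun t => ssum (fun y => g y t) (lo + 1)%Z n)).
    apply H; lia. apply IHn; intros; apply H; lia.
Qed.

Lemma ssum_zero lo n : ssum (fun _ => 0) lo n = 0.
Proof. revert lo; induction n; intros; simpl; auto. rewrite IHn; ring. Qed.

Section Core.
Variables (a b : R) (M : nat) (beta : R) (K : nat) (u v : Z -> R -> R).
Hypotheses (ha : 0 < a) (hb : 0 < b) (hM : (1 <= M)%nat) (hbeta : beta = 0 \/ beta = 1).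
Hypothesis (Hu : is_mf_solution a b M u) (Hu0 : forall x, 0 <= u x 0 <= 1).
Hypothesis (Hv : is_restricted_solution a b M K beta v)
  (Hv0 : forall x, (Z.abs x <= Z.of_nat K)%Z -> v x 0 = u x 0).

Let c := b / (2 * INR M).
Definition cA := 4 * a + 4 * INR M * (b / (2 * INR M)) + 2 * (b / (2 * INR M)) * exp (INR M) * (2 * INR M).
Definition cB := 2 * (b / (2 * INR M)) * exp (INR M) * (2 * INR M) * INR M.

Lemma c_nonneg : 0 <= c.
Proof. unfold c. apply coefc_nonneg; auto. Qed.

Lemma u01 : forall y t, 0 <= t -> 0 <= u y t <= 1.
Proof.
  intros y t Ht. destruct (Hu y) as [Hrc Hd].
  apply (inv01 a b M (u y) (fun t z => u z t) y); auto.
Qed.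

Lemma v01 : forall y t, (Z.abs y <= Z.of_nat K)%Z -> 0 <= t -> 0 <= v y t <= 1.
Proof.
  intros y t Hy Ht. destruct (Hv y Hy) as [Hrc Hd].
  apply (inv01 a b M (v y) (fun t => ext_cfg K beta v t) y); auto.
  rewrite Hv0; auto.
Qed.

Lemma ext01 : forall y t, 0 <= t -> 0 <= ext_cfg K beta v t y <= 1.
Proof.
  intros y t Ht. unfold ext_cfg. destruct (Z.abs y <=? Z.of_nat K)%Z eqn:E.
  - apply Z.leb_le in E. apply v01; auto.
  - destruct hbeta; subst; lra.
Qed.

Definition gg (y : Z) (t : R) := wt K y * ((v y t - u y t) * (v y t - u y t)).
Definition FF (t : R) := ssum (fun y => gg y t) (- Z.of_nat K) (2*K+1).

Lemma inbox y : (- Z.of_nat K <= y < - Z.of_nat K + Z.of_nat (2*K+1))%Z -> (Z.abs y <= Z.of_nat K)%Z.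
Proof. lia. Qed.

Lemma gg_nonneg y t : 0 <= gg y t.
Proof. unfold gg. pose proof (wt_pos K y). apply Rmult_le_pos; [lra|]. apply Rle_0_sqr. Qed.

Lemma core_ineq : forall t, 0 <= t -> FF t <= cB / cA * exp (cA * t).
Proof.
  assert (HA : 0 < cA).
  { unfold cA. pose proof (coefc_nonneg b M hb). pose proof (pos_INR M).
    pose proof (exp_pos (INR M)).
    assert (0 <= 4 * INR M * (b / (2 * INR M))) by (apply Rmult_le_pos; lra).
    assert (0 <= 2 * (b / (2 * INR M)) * exp (INR M) * (2 * INR M)).
    { apply Rmult_le_pos; [apply Rmult_le_pos|]; try lra. }
    lra. }
  assert (HB : 0 <= cB).
  { unfold cB. pose proof (coefc_nonneg b M hb). pose proof (pos_INR M).
    pose proof (exp_pos (INR M)).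
    apply Rmult_le_pos; [|lra]. apply Rmult_le_pos; [|lra]. apply Rmult_le_pos; lra. }
  set (dd := fun y t => mf_rhs a b M (v y t) (ext_cfg K beta v t) y - mf_rhs a b M (u y t) (fun z => u z t) y).
  apply (gronwall FF (fun t => ssum (fun y => wt K y * (dd y t * (v y t - u y t) + (v y t - u y t) * dd y t))
           (- Z.of_nat K) (2*K+1)) cA cB HA HB).
  - unfold FF. apply ssum_rc. intros y Hy. apply inbox in Hy.
    destruct (Hv y Hy) as [Hv1 _]. destruct (Hu y) as [Hu1 _].
    unfold gg. apply (rc_mult (fun _ => wt K y)). apply rc_const.
    apply rc_mult; apply rc_minus; auto.
  - unfold FF. transitivity (ssum (fun _ => 0) (- Z.of_nat K) (2*K+1)); [|apply ssum_zero]. apply ssum_ext.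
    intros y Hy. apply inbox in Hy. unfold gg. rewrite Hv0; auto. ring.
  - intros t Ht. unfold FF. apply (ssum_deriv gg (fun y t => wt K y * (dd y t * (v y t - u y t) + (v y t - u y t) * dd y t))). intros y Hy. apply inbox in Hy.
    destruct (Hv y Hy) as [_ Hv2]. destruct (Hu y) as [_ Hu2].
    unfold gg.
    pose proof (dmul (fun _ => wt K y) (fun s => (v y s - u y s) * (v y s - u y s)) 0
       (dd y t * (v y t - u y t) + (v y t - u y t) * dd y t) t (derivable_pt_lim_const _ _)) as HH.
    replace (wt K y * (dd y t * (v y t - u y t) + (v y t - u y t) * dd y t))
      with (0 * ((v y t - u y t) * (v y t - u y t)) + wt K y * (dd y t * (v y t - u y t) + (v y t - u y t) * dd y t)) by ring.
    cbv beta in HH. apply HH. unfold dd.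
    apply (dmul (fun s => v y s - u y s) (fun s => v y s - u y s)); apply (dminus (v y) (u y)); auto.
  - intros t Ht.
    set (W := ext_cfg K beta v t). set (U := fun z => u z t).
    set (Gt := fun z => wt K z * (W z - U z)^2).
    set (C1 := 4 * a + 4 * INR M * (b / (2 * INR M))).
    set (k2 := 2 * (b / (2 * INR M)) * exp (INR M)).
    assert (HW : forall y, 0 <= W y <= 1) by (intros; apply ext01; lra).
    assert (HU : forall y, 0 <= U y <= 1) by (intros; apply u01; lra).
    assert (Hc : 0 <= b / (2 * INR M)) by (apply coefc_nonneg; auto).
    assert (Hstep : forall y, (- Z.of_nat K <= y < - Z.of_nat K + Z.of_nat (2*K+1))%Z ->
       wt K y * (dd y t * (v y t - u y t) + (v y t - u y t) * dd y t)
         <= C1 * gg y t + k2 * NL M Gt y).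
    { intros y Hy. apply inbox in Hy.
      pose proof (key_site a b M (v y t) (u y t) W U y ha hb hM (v01 y t Hy ltac:(lra))
                    (u01 y t ltac:(lra)) HW HU) as HK.
      pose proof (nbr_weight K M M (fun z => W z - U z) y (le_n M)) as HN.
      pose proof (wt_pos K y).
      assert (wt K y * (2 * (v y t - u y t) * (mf_rhs a b M (v y t) W y - mf_rhs a b M (u y t) U y))
         <= wt K y * ((4 * a + 4 * INR M * (b / (2 * INR M))) * (v y t - u y t) ^ 2 +
             2 * (b / (2 * INR M)) * nbr_sum M (fun y0 : Z => W y0 - U y0) y))
        by (apply Rmult_le_compat_l; lra).
      fold C1 in H0.
      assert (2 * (b / (2 * INR M)) * (wt K y * nbr_sum M (fun y0 : Z => W y0 - U y0) y)
              <= 2 * (b / (2 * INR M)) * (exp (INR M) * NL M (fun y0 : Z => wt K y0 * (W y0 - U y0) ^ 2) y))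
        by (apply Rmult_le_compat_l; lra).
      unfold gg, k2, Gt. unfold dd. fold W U.
      replace (wt K y * ((mf_rhs a b M (v y t) W y - mf_rhs a b M (u y t) U y) * (v y t - u y t) +
        (v y t - u y t) * (mf_rhs a b M (v y t) W y - mf_rhs a b M (u y t) U y)))
        with (wt K y * (2 * (v y t - u y t) * (mf_rhs a b M (v y t) W y - mf_rhs a b M (u y t) U y))) by ring.
      replace (C1 * (wt K y * ((v y t - u y t) * (v y t - u y t))))
        with (wt K y * (C1 * (v y t - u y t) ^ 2)) by ring.
      nra. }
    apply Rle_trans with (ssum (fun y => C1 * gg y t + k2 * NL M Gt y) (- Z.of_nat K) (2*K+1)).
    { apply ssum_le. exact Hstep. }
    rewrite ssum_plus, ssum_scal, (ssum_scal k2 (fun y => NL M Gt y)).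
    assert (HGp : forall y, 0 <= Gt y).
    { intros y. unfold Gt. pose proof (wt_pos K y). apply Rmult_le_pos; [lra|]. apply pow2_ge_0. }
    assert (HGo : forall y, (Z.of_nat K < Z.abs y)%Z -> Gt y <= 1).
    { intros y Hy. unfold Gt, W, U, ext_cfg.
      replace (Z.abs y <=? Z.of_nat K)%Z with false by (symmetry; apply Z.leb_gt; lia).
      assert (wt K y <= 1).
      { unfold wt. rewrite <- exp_0. apply exp_le. apply IZR_le. lia. }
      pose proof (u01 y t ltac:(lra)). pose proof (wt_pos K y).
      assert ((beta - u y t)^2 <= 1) by (destruct hbeta; subst; nra).
      assert (0 <= (beta - u y t)^2) by apply pow2_ge_0. nra. }
    pose proof (NL_sum Gt K M M HGp HGo (le_n M)) as HNL.
    assert (HF : ssum Gt (- Z.of_nat K) (2*K+1) = FF t).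
    { unfold FF. apply ssum_ext. intros y Hy. apply inbox in Hy.
      unfold Gt, gg, W, U, ext_cfg. replace (Z.abs y <=? Z.of_nat K)%Z with true by (symmetry; apply Z.leb_le; lia).
      ring. }
    rewrite HF in HNL. fold FF.
    change (ssum (fun y => gg y t) (- Z.of_nat K) (2*K+1)) with (FF t).
    assert (0 <= k2) by (unfold k2; pose proof (exp_pos (INR M)); apply Rmult_le_pos; lra).
    assert (k2 * ssum (fun y => NL M Gt y) (- Z.of_nat K) (2 * K + 1) <= k2 * (2 * INR M * (FF t + INR M)))
      by (apply Rmult_le_compat_l; auto).
    unfold cA, cB. fold C1 k2. nra.
Qed.
End Core.

Lemma cA_pos a b M : 0 < a -> 0 < b -> 0 < cA a b M.
Proof.
  intros ha hb. unfold cA. pose proof (coefc_nonneg b M hb). pose proof (pos_INR M).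
  pose proof (exp_pos (INR M)).
  assert (0 <= 4 * INR M * (b / (2 * INR M))) by (apply Rmult_le_pos; lra).
  assert (0 <= 2 * (b / (2 * INR M)) * exp (INR M) * (2 * INR M)).
  { apply Rmult_le_pos; [apply Rmult_le_pos|]; try lra. }
  lra.
Qed.

Lemma cB_nonneg b M : 0 < b -> 0 <= cB b M.
Proof.
  intros hb. unfold cB. pose proof (coefc_nonneg b M hb). pose proof (pos_INR M).
  pose proof (exp_pos (INR M)).
  apply Rmult_le_pos; [|lra]. apply Rmult_le_pos; [|lra]. apply Rmult_le_pos; lra.
Qed.

Lemma ln_nonneg x : 1 <= x -> 0 <= ln x.
Proof.
  intros [H|H]. rewrite <- ln_1. left. apply ln_increasing; lra. subst. rewrite ln_1; lra.
Qed.

Theorem lemma4p7 (a b : R) (M : nat) (beta : R)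
  (ha : 0 < a) (hb : 0 < b) (hM : (1 <= M)%nat) (hbeta : beta = 0 \/ beta = 1)
  (alpha1 alpha2 : R) (h1 : 0 < alpha1) (h2 : 0 < alpha2)
  (kappa : R) (hk : 0 < kappa) :
  exists alpha3 : R, 0 < alpha3 /\ exists n0 : nat,
    forall n : nat, (n0 <= n)%nat -> (0 < n)%nat ->
    forall u v : Z -> R -> R,
      is_mf_solution a b M u ->
      (forall x : Z, 0 <= u x 0 <= 1) ->
      is_restricted_solution a b M (roundK alpha3 n) beta v ->
      (forall x : Z, (Z.abs x <= Z.of_nat (roundK alpha3 n))%Z -> v x 0 = u x 0) ->
      forall (x : Z) (t : R),
        IZR (Z.abs x) <= alpha2 * ln (INR n) ->
        0 <= t <= alpha1 * ln (INR n) ->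
        Rabs (v x t - u x t) <= Rpower (INR n) (- kappa).
Proof.
  set (A := cA a b M). set (B := cB b M).
  assert (HA : 0 < A) by (apply cA_pos; auto).
  assert (HB : 0 <= B) by (apply cB_nonneg; auto).
  assert (HBA : 0 <= B / A) by (unfold Rdiv; apply Rmult_le_pos; [lra| left; apply Rinv_0_lt_compat; lra]).
  exists (A * alpha1 + alpha2 + 2 * kappa + 1). split.
  { assert (0 < A * alpha1) by (apply Rmult_lt_0_compat; lra). lra. }
  exists (Z.to_nat (up (B / A))).
  intros n Hn0 Hnpos u v Hu Hu0 Hv Hv0 x t Hx Ht.
  set (K := roundK (A * alpha1 + alpha2 + 2 * kappa + 1) n) in *.
  set (L := ln (INR n)).
  assert (Hn1 : 1 <= INR n) by (apply (le_INR 1); lia).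
  assert (HL : 0 <= L) by (apply ln_nonneg; auto).
  assert (HnBA : B / A <= INR n).
  { destruct (archimed (B / A)) as [Hu1 _].
    assert (Hup : (0 <= up (B / A))%Z) by (apply le_IZR; lra).
    apply le_INR in Hn0. rewrite INR_IZR_INZ, Z2Nat.id in Hn0 by auto. lra. }
  assert (HK : (A * alpha1 + alpha2 + 2 * kappa + 1) * L < IZR (Z.of_nat K)).
  { unfold K, roundK. fold L.
    destruct (archimed ((A * alpha1 + alpha2 + 2 * kappa + 1) * L)) as [Hu1 _].
    assert (0 <= (A * alpha1 + alpha2 + 2 * kappa + 1) * L).
    { apply Rmult_le_pos; auto. assert (0 < A * alpha1) by (apply Rmult_lt_0_compat; lra). lra. }
    rewrite Z2Nat.id; [lra|]. apply le_IZR; lra. }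
  assert (HxK : (Z.abs x <= Z.of_nat K)%Z).
  { apply le_IZR. fold L in Hx. assert (alpha2 * L <= (A * alpha1 + alpha2 + 2 * kappa + 1) * L).
    { apply Rmult_le_compat_r; auto. assert (0 < A * alpha1) by (apply Rmult_lt_0_compat; lra). lra. }
    lra. }
  pose proof (core_ineq a b M beta K u v ha hb hM hbeta Hu Hu0 Hv Hv0 t ltac:(lra)) as HC.
  fold A B in HC.
  assert (Hg : gg K u v x t <= FF K u v t).
  { unfold FF. apply (ssum_term (fun y => gg K u v y t)). intros; apply gg_nonneg. lia. }
  unfold gg in Hg.
  set (d := v x t - u x t) in *.
  set (E := IZR (Z.of_nat K - Z.abs x)).
  assert (Hw : wt K x * exp (- E) = 1).
  { unfold wt. fold E. rewrite <- exp_plus. replace (E + - E) with 0 by ring. apply exp_0. }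
  assert (Hd2 : d * d <= B / A * (exp (A * t) * exp (- E))).
  { pose proof (exp_pos (- E)).
    assert (wt K x * (d * d) * exp (- E) <= B / A * exp (A * t) * exp (- E)).
    { apply Rmult_le_compat_r; lra. }
    replace (wt K x * (d * d) * exp (- E)) with (d * d * (wt K x * exp (- E))) in H0 by ring.
    rewrite Hw in H0. lra. }
  set (P := exp (- kappa * L)).
  assert (HP : 0 < P) by apply exp_pos.
  assert (Hexp : exp (A * t) * exp (- E) <= exp (- L) * (P * P)).
  { unfold P. rewrite <- !exp_plus. apply exp_le.
    unfold E. rewrite minus_IZR. rewrite <- INR_IZR_INZ in HK |- *.
    fold L in Ht.
    assert (A * t <= A * (alpha1 * L)) by (apply Rmult_le_compat_l; lra).
    fold L in Hx. nra. }
  assert (HnL : exp (- L) * INR n = 1).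
  { unfold L. rewrite <- (exp_ln (INR n)) at 2 by lra. rewrite <- exp_plus.
    replace (- ln (INR n) + ln (INR n)) with 0 by ring. apply exp_0. }
  assert (Hd3 : d * d <= P * P).
  { pose proof (exp_pos (- L)).
    apply Rle_trans with (B / A * (exp (- L) * (P * P))).
    - apply Rle_trans with (B / A * (exp (A * t) * exp (- E))); auto.
      apply Rmult_le_compat_l; auto.
    - apply Rle_trans with (INR n * (exp (- L) * (P * P))).
      + apply Rmult_le_compat_r; auto. assert (0 <= P * P) by nra. nra.
      + replace (INR n * (exp (- L) * (P * P))) with ((exp (- L) * INR n) * (P * P)) by ring.
        rewrite HnL. lra. }
  unfold Rpower. replace (- kappa * ln (INR n)) with (- kappa * L) by reflexivity. fold P.
  apply Rabs_le. split; nra.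
Qed.
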